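(* For each integer $n \ge 0$, define $D_{a,n} = \overline{D}(-\tfrac12 + 5\cdot 2^{2n+1}, 2^{-(2n+4)})$ and $D_{b,n} = \overline{D}(-\tfrac12 + 7\cdot 2^{2n+1}, 2^{-(2n+4)})$. Then every $z \in \mathbb{Q}_2$ lying in $D_{a,n}$ or $D_{b,n}$ for some $n \ge 0$ has a bounded forward orbit under $f_1(z) = 3z^3 - \tfrac92 z^2 + 1$.
   Context: Let $|\cdot|$ denote the $2$-adic absolute value on $\mathbb{C}_2$, normalized by $|2| = 1/2$. The notation $\overline{D}(a,\delta)$ denotes the closed disk $\{z \in \mathbb{C}_2 : |z-a| \le \delta\}$. Here $f_1$ is the member with $t=1$ of the family $f_t(z) = -\tfrac32 t(-2z^3+3z^2)+1$. *)

(* Defs.v *)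
(* Q_2 is modelled via 2-adic Cauchy sequences of rationals. *)
From HB Require Import structures.
From mathcomp Require Import all_boot all_order all_algebra.
Set Implicit Arguments. Unset Strict Implicit. Unset Printing Implicit Defensive.
Import Order.TTheory GRing.Theory Num.Theory.
Local Open Scope ring_scope.

Definition abs2 (q : rat) : rat :=
  if q == 0 then 0
  else (2%:R ^+ logn 2 `|denq q|%N) / (2%:R ^+ logn 2 `|numq q|%N).

(* q is a Cauchy sequence for the 2-adic absolute value:
   such sequences represent the elements of Q_2 (the completion). *)
Definition cauchy2 (q : nat -> rat) : Prop :=
  forall e : rat, 0 < e -> exists N : nat, forall m n : nat,
    (N <= m)%N -> (N <= n)%N -> abs2 (q m - q n) < e.

(* For the element z of Q_2 represented by q and a rational radius r > 0:
   |z - c|_2 <= r  iff  eventually |q k - c|_2 <= r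
   (|q k - c|_2 is eventually constant equal to |z - c|_2 when z <> c,
    and tends to 0 when z = c). *)
Definition in_cdisk2 (q : nat -> rat) (c r : rat) : Prop :=
  exists N : nat, forall k : nat, (N <= k)%N -> abs2 (q k - c) <= r.

Definition f_t (t z : rat) : rat :=
  - (3%:R / 2%:R) * t * (- 2%:R * z ^+ 3 + 3%:R * z ^+ 2) + 1.
Definition f1 (z : rat) : rat := f_t 1 z.

(* Since f1 is a polynomial, the sequence k |-> f1^[n] (q k) represents
   f1^[n](z) in Q_2.  The forward orbit of z is bounded iff there is B > 0
   with |f1^[n](z)|_2 <= B for all n. *)
Definition bounded_orbit2 (f : rat -> rat) (q : nat -> rat) : Prop :=
  exists B : rat, 0 < B /\ forall n : nat, exists N : nat, forall k : nat,
    (N <= k)%N -> abs2 (iter n f (q k)) <= B.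

Definition center_a (n : nat) : rat := - (1 / 2%:R) + 5%:R * 2%:R ^+ (2 * n + 1).
Definition center_b (n : nat) : rat := - (1 / 2%:R) + 7%:R * 2%:R ^+ (2 * n + 1).
Definition radius (n : nat) : rat := (2%:R ^+ (2 * n + 4))^-1.

(* Main.v *)
Require Import Defs.
From mathcomp Require Import all_boot all_order all_algebra.
From mathcomp Require Import all_boot all_order all_algebra.
From mathcomp Require Import ring lra zify.
Import Order.TTheory GRing.Theory Num.Theory.
Local Open Scope ring_scope.
Definition oddr (c : int) : rat := 2 * c%:~R + 1.
Lemma oddr_neq0 c : oddr c != 0.
Proof.
rewrite /oddr.
have -> : (2 * c%:~R + 1 : rat) = (2 * c + 1)%:~R by rewrite rmorphD rmorphM /=.
rewrite intr_eq0; apply/eqP; lia.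
Qed.
Lemma cube_neq0 (c : rat) : 2 * c + 1 != 0 ->
  2 * (4 * c ^+ 3 + 6 * c ^+ 2 + 3 * c) + 1 != 0.
Proof.
move=> h; rewrite (_ : _ + 1 = (2 * c + 1) ^+ 3); first by rewrite expf_neq0.
ring.
Qed.
Lemma int_par (a : int) : exists e, a = 2 * e \/ a = 2 * e + 1.
Proof.
exists (a %/ 2)%Z.
have h1 := divz_eq a 2.
have h2 : (0 <= a %% 2)%Z by apply: modz_ge0.
have h3 : (a %% 2 < 2)%Z by apply: ltz_pmod.
lia.
Qed.

Lemma disk_form (x : rat) (v : nat) : (0 < v)%N -> abs2 x <= (2%:R ^+ v)^-1 ->
  exists a c : int, x = 2 ^+ v * a%:~R / oddr c.
Proof.
move=> v0 H.
have [->|x0] := eqVneq x 0.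
  by exists 0, 0; rewrite mulr0 mul0r.
move: H; rewrite /abs2 (negPf x0).
set ld := logn 2 `|denq x|. set ln := logn 2 `|numq x|.
rewrite -!natrX => H.
have key : (ld + v <= ln)%N.
  rewrite -(leq_exp2l _ _ (isT : (1 < 2)%N)) expnD -(ler_nat rat) natrM.
  rewrite ler_pdivrMr ?ltr0n ?expn_gt0 // mulrC ler_pdivlMr ?ltr0n ?expn_gt0 // in H.
have n0 : (0 < `|numq x|)%N by rewrite absz_gt0 numq_eq0.
have dv : (2 ^ v %| `|numq x|)%N.
  by rewrite pfactor_dvdn //; exact: leq_trans (leq_addl ld v) key.
have d2 : (2 %| `|numq x|)%N.
  by apply: dvdn_trans dv; rewrite dvdn_exp.
have dodd : odd `|denq x|.
  rewrite -[odd _]negbK -dvdn2; apply/negP => h.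
  have := coprime_num_den x; rewrite /coprime => /eqP g.
  have : (2 %| gcdn `|numq x| `|denq x|)%N by rewrite dvdn_gcd d2 h.
  by rewrite g.
have [m hm] : exists m, numq x = m * (2 ^+ v)%:Z.
  apply/dvdzP; rewrite dvdzE /=; exact: dv.
set dn := absz (denq x).
exists m, (dn./2)%:Z.
have hd : denq x = (1 + (dn./2).*2)%N :> int.
  by have := odd_double_half dn; rewrite dodd => ->; rewrite /dn absz_denq.
rewrite -[x in LHS]divq_num_den hm hd -muln2 intrM rmorphXn /= -!pmulrn natrD natrM natrX.
have := oddr_neq0 (dn./2)%:Z; rewrite /oddr -!pmulrn => hz.
rewrite (_ : 1%:R + (dn./2)%:R * 2%:R = 2 * (dn./2)%:R + 1 :> rat); last by ring.
by rewrite rmorphXn /= [m%:~R * _]mulrC.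
Qed.

Lemma abs2_le2 (r c : int) : abs2 (r%:~R / (2 * oddr c)) <= 2.
Proof.
set x := r%:~R / (2 * oddr c).
have [->|x0] := eqVneq x 0; first by rewrite /abs2 eqxx ler0n.
rewrite /abs2 (negPf x0) -!natrX.
set ld := logn 2 `|denq x|. set ln := logn 2 `|numq x|.
have ld1 : (ld <= 1)%N.
  rewrite leqNgt; apply/negP => h.
  have dpos : (0 < `|denq x|)%N by rewrite absz_gt0 denq_eq0.
  have d4 : (2 ^ 2 %| `|denq x|)%N by rewrite pfactor_dvdn.
  have d2 : (2 %| `|denq x|)%N by apply: dvdn_trans d4.
  have nodd : ~~ (2 %| `|numq x|)%N.
    apply/negP => h2.
    have := coprime_num_den x; rewrite /coprime => /eqP g.
    have : (2 %| gcdn `|numq x| `|denq x|)%N by rewrite dvdn_gcd d2 h2.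
    by rewrite g.
  have rel : numq x * (2 * (2 * c + 1)) = r * denq x.
    apply: (@intr_inj rat).
    rewrite !intrM numqE /x /oddr.
    have := oddr_neq0 c; rewrite /oddr => hc.
    rewrite !intrD !intrM. field. by rewrite hc.
  have [t ht] : exists t, denq x = t * 4.
    by apply/dvdzP; rewrite dvdzE.
  have [u [hu|hu]] := int_par (numq x).
    by move: nodd; rewrite hu abszM dvdn_mulr.
  rewrite hu ht in rel.
  have e1 : (2 * u + 1) * (2 * (2 * c + 1)) = 4 * (2 * u * c + u + c) + 2 by ring.
  have e2 : r * (t * 4) = 4 * (r * t) by ring.
  rewrite e1 e2 in rel.
  lia.
rewrite ler_pdivrMr ?ltr0n ?expn_gt0 //.
rewrite (_ : 2 * _ = (2 * 2 ^ ln)%N%:R); last by rewrite natrM.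
rewrite ler_nat.
apply: (leq_trans (n := 2 ^ 1)); first by rewrite leq_exp2l.
by rewrite leq_pmulr ?expn_gt0.
Qed.

Definition Pa (m : nat) (z : rat) := exists a c : int,
  z = -(1/2) + 2^+(2 * m + 1)%N * (5 * oddr c + 8 * a%:~R) / oddr c.
Definition Pb (m : nat) (z : rat) := exists a c : int,
  z = -(1/2) + 2^+(2 * m + 1)%N * (7 * oddr c + 8 * a%:~R) / oddr c.
Definition PB (z : rat) := exists a c : int, z = 3 + 4 * a%:~R / oddr c.
Definition PC (z : rat) := exists a c : int, z = 2 + 4 * a%:~R / oddr c.
Definition PE (z : rat) := exists a c : int, z = 7 + 16 * a%:~R / oddr c.

Lemma oddr_neq0' (c : int) : 2 * (c%:~R : rat) + 1 != 0.
Proof. exact: (oddr_neq0 c). Qed.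
Ltac fin c := rewrite /f1 /f_t /oddr;
  field; by rewrite (@cube_neq0 _ (oddr_neq0' c)) (oddr_neq0' c).

Lemma stepab m z : Pa m.+1 z -> Pb m (f1 z).
Proof.
move=> [a [c ->]].
set p : rat := 2 ^+ (2 * m).
have e1 : (2 : rat) ^+ (2 * m.+1 + 1) = 8 * p.
  by rewrite /p (_ : (2 * m.+1 + 1 = 3 + 2 * m)%N) ?exprD //; lia.
have e2 : (2 : rat) ^+ (2 * m + 1) = 2 * p.
  by rewrite /p exprD mulrC.
have hp : p = (2 ^+ (2 * m) : int)%:~R by rewrite /p rmorphXn.
rewrite e1 /Pb e2.
set pz : int := 2 ^+ (2 * m).
set b := (2 * c + 1).
set X := 5 * b + 8 * a.
exists (16 * b^+3 + 27 * a * b^+2 - 36 * pz * X^+2 * b + 96 * pz^+2 * X^+3), (4 * c^+3 + 6 * c^+2 + 3 * c).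
rewrite hp /X /b. fin c.
Qed.

Lemma stepba m z : Pb m.+1 z -> Pa m (f1 z).
Proof.
move=> [a [c ->]].
set p : rat := 2 ^+ (2 * m).
have e1 : (2 : rat) ^+ (2 * m.+1 + 1) = 8 * p.
  by rewrite /p (_ : (2 * m.+1 + 1 = 3 + 2 * m)%N) ?exprD //; lia.
have e2 : (2 : rat) ^+ (2 * m + 1) = 2 * p.
  by rewrite /p exprD mulrC.
have hp : p = (2 ^+ (2 * m) : int)%:~R by rewrite /p rmorphXn.
rewrite e1 /Pa e2.
set pz : int := 2 ^+ (2 * m).
set b := (2 * c + 1).
set X := 7 * b + 8 * a.
exists (23 * b^+3 + 27 * a * b^+2 - 36 * pz * X^+2 * b + 96 * pz^+2 * X^+3), (4 * c^+3 + 6 * c^+2 + 3 * c).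
rewrite hp /X /b. fin c.
Qed.

Lemma stepAB z : Pa 0 z -> PB (f1 z).
Proof.
move=> [a [c ->]].
exists (541 + (3*1000+246)*c + (6*1000+492)*c^+2 + (4*1000+328)*c^+3 + (2*1000+907)*a + (11*1000+628)*a*c + (11*1000+628)*a*c^+2 + (5*1000+184)*a^+2 + (10*1000+368)*a^+2*c + (3*1000+72)*a^+3), (4 * c^+3 + 6 * c^+2 + 3 * c).
fin c.
Qed.

Lemma stepEA z : PE z -> Pa 0 (f1 z).
Proof.
move=> [a [c ->]].
exists (50 + 300*c + 600*c^+2 + 400*c^+3 + 378*a + (1*1000+512)*a*c + (1*1000+512)*a*c^+2 + 936*a^+2 + (1*1000+872)*a^+2*c + 768*a^+3), (4 * c^+3 + 6 * c^+2 + 3 * c).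
fin c.
Qed.

Lemma stepBC z : Pb 0 z -> PC (f1 z).
Proof.
move=> [a [c ->]].
exists ((1*1000+640) + (9*1000+840)*c + (19*1000+680)*c^+2 + (13*1000+120)*c^+3 + (6*1000+75)*a + (24*1000+300)*a*c + (24*1000+300)*a*c^+2 + (7*1000+488)*a^+2 + (14*1000+976)*a^+2*c + (3*1000+72)*a^+3), (4 * c^+3 + 6 * c^+2 + 3 * c).
fin c.
Qed.

Lemma stepBA z : PB z -> Pa 0 (f1 z).
Proof.
move=> [a [c ->]].
have [e [-> | ->]] := int_par a.
  exists (2 + 12*c + 24*c^+2 + 16*c^+3 + 27*e + 108*e*c + 108*e*c^+2 + 90*e^+2 + 180*e^+2*c + 96*e^+3), (4 * c^+3 + 6 * c^+2 + 3 * c).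
  fin c.
exists (50 + 111*c + 78*c^+2 + 16*c^+3 + 189*e + 288*e*c + 108*e*c^+2 + 234*e^+2 + 180*e^+2*c + 96*e^+3), (4 * c^+3 + 6 * c^+2 + 3 * c).
fin c.
Qed.

Lemma stepCE z : PC z -> PE (f1 z).
Proof.
move=> [a [c ->]].
have [e [-> | ->]] := int_par a.
  exists (9*e + 36*e*c + 36*e*c^+2 + 54*e^+2 + 108*e^+2*c + 96*e^+3), (4 * c^+3 + 6 * c^+2 + 3 * c).
  fin c.
exists (30 + 45*c + 18*c^+2 + 135*e + 144*e*c + 36*e*c^+2 + 198*e^+2 + 108*e^+2*c + 96*e^+3), (4 * c^+3 + 6 * c^+2 + 3 * c).
fin c.
Qed.

Definition good (z : rat) :=
  exists m, Pa m z \/ Pb m z \/ PB z \/ PC z \/ PE z.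

Lemma good_step z : good z -> good (f1 z).
Proof.
move=> [m [h|[h|[h|[h|h]]]]].
- case: m h => [|m] h.
    by exists 0%N; right; right; left; apply: stepAB.
  by exists m; right; left; apply: stepab.
- case: m h => [|m] h.
    by exists 0%N; right; right; right; left; apply: stepBC.
  by exists m; left; apply: stepba.
- by exists 0%N; left; apply: stepBA.
- by exists 0%N; right; right; right; right; apply: stepCE.
- by exists 0%N; left; apply: stepEA.
Qed.

Lemma good_iter n z : good z -> good (iter n f1 z).
Proof. by move=> h; elim: n => [|n IH] //=; apply: good_step. Qed.

Lemma good_bound z : good z -> abs2 z <= 2.
Proof.
have hc := oddr_neq0.
move=> [m [[a [c ->]]|[[a [c ->]]|[[a [c ->]]|[[a [c ->]]|[a [c ->]]]]]]].
- rewrite (_ : _ + _ = (- (2 * c + 1) + 2 ^+ (2 * m + 2) * (5 * (2 * c + 1) + 8 * a))%:~R / (2 * oddr c));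
    first exact: abs2_le2.
  have := hc c; rewrite /oddr => h.
  rewrite ?intrD ?intrM ?intrN ?rmorphXn /= ?exprD.
  field. by rewrite h.
- rewrite (_ : _ + _ = (- (2 * c + 1) + 2 ^+ (2 * m + 2) * (7 * (2 * c + 1) + 8 * a))%:~R / (2 * oddr c));
    first exact: abs2_le2.
  have := hc c; rewrite /oddr => h.
  rewrite ?intrD ?intrM ?intrN ?rmorphXn /= ?exprD.
  field. by rewrite h.
- rewrite (_ : _ + _ = (6 * (2 * c + 1) + 8 * a)%:~R / (2 * oddr c)); first exact: abs2_le2.
  have := hc c; rewrite /oddr => h.
  rewrite !intrD !intrM. field. by rewrite h.
- rewrite (_ : _ + _ = (4 * (2 * c + 1) + 8 * a)%:~R / (2 * oddr c)); first exact: abs2_le2.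
  have := hc c; rewrite /oddr => h.
  rewrite !intrD !intrM. field. by rewrite h.
- rewrite (_ : _ + _ = (14 * (2 * c + 1) + 32 * a)%:~R / (2 * oddr c)); first exact: abs2_le2.
  have := hc c; rewrite /oddr => h.
  rewrite !intrD !intrM. field. by rewrite h.
Qed.

Theorem mainTheorem9 :
  forall q : nat -> rat, cauchy2 q ->
  (exists n : nat,
     in_cdisk2 q (center_a n) (radius n) \/ in_cdisk2 q (center_b n) (radius n)) ->
  bounded_orbit2 f1 q.
Proof.
move=> q _ [n hn].
have hgood : exists N, forall k, (N <= k)%N -> good (q k).
  have e : (2 : rat) ^+ (2 * n + 4) = 8 * 2 ^+ (2 * n + 1).
    by rewrite (_ : (2 * n + 4 = 3 + (2 * n + 1))%N) ?exprD //; lia.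
  case: hn => [[N HN]|[N HN]]; exists N => k hk;
    have [a [c hac]] := @disk_form _ (2 * n + 4) (ltac:(lia)) (HN k hk);
    have := oddr_neq0 c => hc; exists n.
    left; exists a, c.
    rewrite -[q k](subrK (center_a n)) hac e /center_a. field. exact: hc.
  right; left; exists a, c.
  rewrite -[q k](subrK (center_b n)) hac e /center_b. field. exact: hc.
case: hgood => N HN.
exists 2; split => // m.
exists N => k hk.
by apply: good_bound; apply: good_iter; apply: HN.
Qed.
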